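(* Let $D>0$, let $(L,\mathbf N)$ be an architecture with $N_0=d$, let $q\in[1,\infty]$, $r\ge1$, $\eta>0$, and let $Q_\eta:\Theta_{L,\mathbf N}\to\Theta_{L,\mathbf N}$ act coordinatewise by $Q_\eta(x)=\lfloor x/\eta\rfloor\eta$. Let $N_{\min}=\min_{0\le\ell\le L}N_\ell$ and $c':=DN_{\min}^{1/q}$. If $\varepsilon>0$ is such that $$\max_{\theta\in\Theta^q_{L,\mathbf N}(r)}\ \max_{x\in[-D,D]^d}\|R_\theta(x)-R_{Q_\eta(\theta)}(x)\|_q\le\varepsilon,$$ then $\min(r,\eta)\le\frac{\varepsilon}{c'r^{L-1}}$. In particular, if moreover $\varepsilon<c'r^L$, then $\eta\le\frac{\varepsilon}{c'r^{L-1}}$.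
   Context: ReLU $\rho(x)=\max(0,x)$ coordinatewise. Architecture $(L,\mathbf N)$, $\mathbf N=(N_0,\dots,N_L)$; parameters $\theta=(W_1,\dots,W_L,b_1,\dots,b_L)$, $W_\ell\in\mathbb R^{N_\ell\times N_{\ell-1}}$, $b_\ell\in\mathbb R^{N_\ell}$, forming $\Theta_{L,\mathbf N}$. Realization: $R_\theta(x)=W_Ly_{L-1}(x)+b_L$, $y_0=x$, $y_\ell=\rho(W_\ell y_{\ell-1}+b_\ell)$, $1\le\ell\le L-1$. $\|M\|_{q\to q}$ is the operator norm induced by $\|\cdot\|_q$. $\Theta^q_{L,\mathbf N}(r)=\{\theta:\|W_\ell\|_{q\to q}\le r,\ \|b_\ell\|_q\le r\ \forall\ell\}$. $\lfloor x\rfloor=\max\{n\in\mathbb Z:n\le x\}$; $N^{1/\infty}:=1$. *)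

(* Defs.v *)
From HB Require Import structures.
From mathcomp Require Import all_boot all_order all_algebra.
From mathcomp Require Import all_classical all_reals.
From mathcomp Require Import ereal exp.
Set Implicit Arguments. Unset Strict Implicit. Unset Printing Implicit Defensive.
Import Order.TTheory GRing.Theory Num.Theory.
Local Open Scope ring_scope.

Section NN.
Variable R : realType.

Definition qnorm (q : \bar R) (n : nat) (v : 'cV[R]_n) : R :=
  match q with
  | +oo%E => \big[Num.max/0]_(i < n) `|v i 0|
  | (p%:E)%E => powR (\sum_(i < n) powR `|v i 0| p) p^-1
  | -oo%E => 0
  end.

Definition opnorm (q : \bar R) (m n : nat) (M : 'M[R]_(m, n)) : R :=
  sup [set qnorm q (M *m x) | x in [set x : 'cV[R]_n | qnorm q x <= 1]].

Definition rootq (q : \bar R) (N : R) : R :=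
  match q with
  | (p%:E)%E => powR N p^-1
  | _ => 1
  end.

Definition relu (n : nat) (v : 'cV[R]_n) : 'cV[R]_n := map_mx (fun t => Num.max 0 t) v.

(* Parameters theta = (W_1..W_L, b_1..b_L) are encoded with a shift of index:
   W l : 'M_(N (l+1), N l) is W_{l+1}, b l is b_{l+1}, for l < L. *)
Fixpoint hidden (N : nat -> nat) (W : forall l, 'M[R]_(N l.+1, N l))
  (b : forall l, 'cV[R]_(N l.+1)) (x : 'cV[R]_(N 0)) (l : nat) : 'cV[R]_(N l) :=
  match l as l0 return 'cV[R]_(N l0) with
  | 0 => x
  | k.+1 => relu (W k *m hidden W b x k + b k)
  end.

Definition realization (L : nat) (N : nat -> nat) (W : forall l, 'M[R]_(N l.+1, N l))
  (b : forall l, 'cV[R]_(N l.+1)) (x : 'cV[R]_(N 0)) : 'cV[R]_(N L) :=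
  match L as L0 return 'cV[R]_(N L0) with
  | 0 => x
  | k.+1 => W k *m hidden W b x k + b k
  end.

Definition in_ball (q : \bar R) (L : nat) (N : nat -> nat)
  (W : forall l, 'M[R]_(N l.+1, N l)) (b : forall l, 'cV[R]_(N l.+1)) (r : R) : Prop :=
  forall l : nat, (l < L)%N -> opnorm q (W l) <= r /\ qnorm q (b l) <= r.

Definition quant (eta t : R) : R := (Num.floor (t / eta))%:~R * eta.

End NN.

(* Main.v *)
Require Import Defs.
From HB Require Import structures.
From mathcomp Require Import all_boot all_order all_algebra.
From mathcomp Require Import all_classical all_reals.
From mathcomp Require Import ereal exp.
From mathcomp Require Import ring lra.
Set Implicit Arguments. Unset Strict Implicit. Unset Printing Implicit Defensive.
Import Order.TTheory GRing.Theory Num.Theory.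
Local Open Scope ring_scope.

Section Helpers.
Variable R : realType.

Definition J (m n1 n2 : nat) : 'M[R]_(n1, n2) :=
  \matrix_(i, j) ((val i == val j) && (val i < m)%N)%:R.

Definition xf n (x : 'cV[R]_n) (k : nat) : R :=
  oapp (fun j : 'I_n => x j 0) 0 (insub k).

Lemma xf_val n (x : 'cV[R]_n) (i : 'I_n) : xf x i = x i 0.
Proof. by rewrite /xf valK. Qed.

Lemma xf_out n (x : 'cV[R]_n) k : (n <= k)%N -> xf x k = 0.
Proof. by move=> h; rewrite /xf insubF // ltnNge h. Qed.

Lemma mulJ m n1 n2 (x : 'cV[R]_n2) i :
  (J m n1 n2 *m x) i 0 = if (val i < m)%N then xf x i else 0.
Proof.
rewrite mxE; case: ifP => him.
  case: (ltnP i n2) => hin.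
    rewrite (bigD1 (Ordinal hin)) //= mxE eqxx him mul1r big1 ?addr0.
      by have := xf_val x (Ordinal hin) => /= ->.
    move=> j hj; rewrite mxE.
    have -> : (val i == val j) = false.
      apply/negbTE; apply: contra hj => /eqP e; apply/eqP/val_inj => /=.
      by rewrite -e.
    by rewrite mul0r.
  rewrite xf_out // big1 // => j _; rewrite mxE.
  have -> : (val i == val j) = false.
    by apply/negbTE; rewrite neq_ltn (leq_trans (ltn_ord j) hin) orbT.
  by rewrite mul0r.
by rewrite big1 // => j _; rewrite mxE him andbF mul0r.
Qed.

Lemma J_const m n1 n2 c (v : 'cV[R]_n2) : (m <= n2)%N ->
  (forall j : 'I_n2, (val j < m)%N -> v j 0 = c) ->
  forall i, (J m n1 n2 *m v) i 0 = if (val i < m)%N then c else 0.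
Proof.
move=> hm hv i; rewrite mulJ; case: ifP => // h.
have hin : (val i < n2)%N by apply: leq_trans h hm.
by have := xf_val v (Ordinal hin) => /= ->; rewrite hv.
Qed.

Lemma sum_J_le m n1 n2 (x : 'cV[R]_n2) (G : R -> R) :
  G 0 = 0 -> (forall y, 0 <= G y) ->
  \sum_(i < n1) G ((J m n1 n2 *m x) i 0) <= \sum_(j < n2) G (x j 0).
Proof.
move=> G0 Gge.
apply: (@le_trans _ _ (\sum_(i < n1) G (xf x i))).
  by apply: ler_sum => i _; rewrite mulJ; case: ifP => // _; rewrite G0.
rewrite -(big_mkord xpredT (fun k => G (xf x k))).
have -> : \sum_(j < n2) G (x j 0) = \sum_(0 <= k < n2) G (xf x k).
  by rewrite big_mkord; apply: eq_bigr => j _; rewrite xf_val.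
apply: (@le_trans _ _ (\sum_(0 <= k < n1 + n2) G (xf x k))).
  rewrite [X in _ <= X](big_cat_nat _ (n:=n1)) ?leq_addr //= lerDl.
  by apply: sumr_ge0.
rewrite [X in X <= _](big_cat_nat _ (n:=n2)) ?leq_addl //= [X in _ + X]big_nat_cond [X in _ + X]big1 ?addr0 //.
by move=> k /andP[/andP[hk _] _]; rewrite xf_out.
Qed.


Lemma powR_ppinv (a p : R) : 0 <= a -> 0 < p -> powR (powR a p) p^-1 = a.
Proof. by move=> a0 p0; rewrite -powRrM mulfV ?gt_eqF // powRr1. Qed.

Lemma qnorm0_le (q : \bar R) n : (1 <= q)%E -> qnorm q (0 : 'cV[R]_n) <= 1.
Proof.
case: q => [p| |] //= hp.
  have p0 : p != 0 by rewrite gt_eqF // (lt_le_trans ltr01) // -lee_fin.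
  rewrite big1 ?powR0 ?invr_eq0 // => i _; rewrite mxE normr0 powR0 //.
by apply: bigmax_le => // i _; rewrite mxE normr0.
Qed.

Lemma qnorm_J_le (q : \bar R) m n1 n2 s (x : 'cV[R]_n2) :
  (1 <= q)%E -> 0 <= s -> qnorm q x <= 1 ->
  qnorm q ((s *: J m n1 n2) *m x) <= s.
Proof.
case: q => [p| |] //= hp s0 hx.
  have p1 : 1 <= p by rewrite -lee_fin.
  have p0 : 0 < p by rewrite (lt_le_trans ltr01).
  have -> : \sum_(i < n1) powR `|((s *: J m n1 n2) *m x) i 0| p =
            powR s p * \sum_(i < n1) powR `|(J m n1 n2 *m x) i 0| p.
    rewrite mulr_sumr; apply: eq_bigr => i _.
    by rewrite -scalemxAl mxE normrM ger0_norm // powRM.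
  apply: (@le_trans _ _ (powR (powR s p * \sum_(j < n2) powR `|x j 0| p) p^-1)).
    apply: ge0_ler_powR; rewrite ?invr_ge0 ?nnegrE; first exact: ltW.
    - by apply: mulr_ge0; [apply: powR_ge0|apply: sumr_ge0 => i _; apply: powR_ge0].
    - by apply: mulr_ge0; [apply: powR_ge0|apply: sumr_ge0 => i _; apply: powR_ge0].
    apply: ler_wpM2l; first exact: powR_ge0.
    apply: (@sum_J_le m n1 n2 x (fun y => powR `|y| p)); last by move=> y; exact: powR_ge0.
    by rewrite normr0 powR0 // gt_eqF.
  rewrite powRM; [|exact: powR_ge0|by apply: sumr_ge0 => i _; exact: powR_ge0].
  by rewrite powR_ppinv // ler_piMr.
apply: bigmax_le => // i _.
rewrite -scalemxAl mxE normrM ger0_norm // ler_piMr //.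
rewrite mulJ; case: ifP => _; last by rewrite normr0.
rewrite /xf; case: insubP => [j _ _|_] /=; last by rewrite normr0.
by apply: le_trans hx; apply: le_bigmax.
Qed.

Lemma qnorm_ind (q : \bar R) n m a (v : 'cV[R]_n) :
  (1 <= q)%E -> 0 <= a -> (0 < m)%N -> (m <= n)%N ->
  (forall i : 'I_n, v i 0 = if (val i < m)%N then a else 0) ->
  qnorm q v = a * rootq q m%:R.
Proof.
case: q => [p| |] //= hp a0 m0 mn hv.
  have p1 : 1 <= p by rewrite -lee_fin.
  have p0 : 0 < p by rewrite (lt_le_trans ltr01).
  have -> : \sum_(i < n) powR `|v i 0| p = m%:R * powR a p.
    have -> : \sum_(i < n) powR `|v i 0| p =
              \sum_(0 <= k < n) (if (k < m)%N then powR a p else 0).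
      rewrite big_mkord; apply: eq_bigr => i _; rewrite hv.
      by case: ifP => _; [rewrite ger0_norm | rewrite normr0 powR0 // gt_eqF].
    rewrite (big_cat_nat _ (n:=m)) //= [X in _ + X]big_nat_cond [X in _ + X]big1.
      rewrite addr0 big_nat_cond (eq_bigr (fun=> powR a p)).
        by rewrite -big_nat_cond sumr_const_nat subn0 mulr_natl.
      by move=> k /andP[/andP[_ ->]].
    by move=> k /andP[/andP[hk _] _]; rewrite ltnNge hk.
  rewrite powRM ?powR_ge0 ?ler0n // powR_ppinv // mulrC //.
rewrite mulr1; apply/le_anti/andP; split.
  by apply: bigmax_le => // i _; rewrite hv; case: ifP => _; rewrite ?normr0 ?ger0_norm.
have hn : (0 < n)%N by apply: leq_trans mn.
apply: le_trans (le_bigmax _ _ (Ordinal hn)).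
by rewrite hv /= m0 ger0_norm.
Qed.

End Helpers.

Lemma bigmin_le_nat (F : nat -> nat) n (l : 'I_n.+1) :
  (\big[minn/F 0%N]_(i < n.+1) F i <= F l)%N.
Proof. have := (@bigmin_le _ _ _ (F 0%N) l (fun i : 'I_n.+1 => F i)). rewrite leEnat. by []. Qed.

Lemma bigmin_pos (F : nat -> nat) n : (forall l, (l <= n)%N -> (0 < F l)%N) ->
  (0 < \big[minn/F 0%N]_(i < n.+1) F i)%N.
Proof.
move=> h; elim/big_rec: _ => [|i x _ hx]; first exact: h.
by rewrite leq_min hx andbT h // -ltnS.
Qed.

Lemma scaleE (R : realType) m n (a : R) (M : 'M[R]_(m, n)) i j : (a *: M) i j = a * M i j.
Proof. by rewrite [LHS]mxE. Qed.

Lemma zeroE (R : realType) m n i j : (0 : 'M[R]_(m,n)) i j = 0.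
Proof. by rewrite mxE. Qed.

Lemma mapE (R : realType) m n (f : R -> R) (M : 'M[R]_(m,n)) i j : map_mx f M i j = f (M i j).
Proof. by rewrite mxE. Qed.

Theorem mainTheorem6 (R : realType) (D : R) (L : nat) (N : nat -> nat)
  (q : \bar R) (r eta eps : R) :
  0 < D -> (0 < L)%N -> (forall l, (l <= L)%N -> (0 < N l)%N) ->
  (1 <= q)%E -> 1 <= r -> 0 < eta -> 0 < eps ->
  (forall (W : forall l, 'M[R]_(N l.+1, N l)) (b : forall l, 'cV[R]_(N l.+1)),
     in_ball q L W b r ->
     forall x : 'cV[R]_(N 0%N), (forall i, `|x i 0| <= D) ->
       qnorm q (realization L W b x
                - realization L (fun l => map_mx (quant eta) (W l))
                                (fun l => map_mx (quant eta) (b l)) x) <= eps) ->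
  let c' := D * rootq q (\big[minn/N 0%N]_(l < L.+1) N l)%:R in
  Num.min r eta <= eps / (c' * r ^+ L.-1) /\
  (eps < c' * r ^+ L -> eta <= eps / (c' * r ^+ L.-1)).
Proof.
case: L => [//|k] D0 _ Npos q1 r1 eta0 eps0 H c' /=.
set m := \big[minn/N 0%N]_(l < k.+2) N l.
have hmle : forall l, (l <= k.+1)%N -> (m <= N l)%N.
  move=> l hl; exact: (@bigmin_le_nat N k.+1 (Ordinal (hl : (l < k.+2)%N))).
have hm0 : (0 < m)%N by apply: bigmin_pos.
have hroot : 0 < rootq q m%:R.
  by case: (q) => [p| |] //=; apply: powR_gt0; rewrite ltr0n.
have r0 : 0 <= r by apply: le_trans r1.
have hquant0 : quant eta 0 = 0.
  by rewrite /quant mul0r floor0 mulr0z mul0r.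
have key : forall t, 0 <= t -> t <= r -> t < eta ->
    t * D * r ^+ k * rootq q m%:R <= eps.
  move=> t t0 tr te.
  have hquantt : quant eta t = 0.
    rewrite /quant (@floor_def _ _ 0) ?mulr0z ?mul0r // add0r mulr1z.
    by rewrite divr_ge0 ?(ltW eta0) //= ltr_pdivrMr // mul1r.
  pose W := fun l => ((if l is 0 then t else r) *: J R m (N l.+1) (N l)
                      : 'M[R]_(N l.+1, N l)).
  pose b := fun l => (0 : 'cV[R]_(N l.+1)).
  pose x := (const_mx D : 'cV[R]_(N 0%N)).
  have hball : in_ball q k.+1 W b r.
    move=> l hl; split.
      rewrite /W /opnorm; apply: ge_sup.
        by eexists; exists 0; [exact: qnorm0_le | reflexivity].
      move=> y [z hz <-].
      have [s0' sr] : 0 <= (if l is 0 then t else r) /\ (if l is 0 then t else r) <= r.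
        by case: (l).
      by apply: (le_trans _ sr); apply: qnorm_J_le.
    by rewrite /b; apply: (le_trans _ r1); apply: qnorm0_le.
  have hx : forall i, `|x i 0| <= D by move=> i; rewrite mxE ger0_norm // ltW.
  have horig : forall j, (j < k.+1)%N -> W j *m hidden W b x j =
      \col_(i < N j.+1) (if (val i < m)%N then t * D * r ^+ j else 0).
    elim=> [|j IH] hj; apply/matrixP => i i0; rewrite (ord1 i0) [RHS]mxE.
      rewrite /W /= -scalemxAl scaleE.
      rewrite (@J_const R m (N 1%N) (N 0%N) D x (hmle 0%N (leq0n _))); last first.
        by move=> jj _; rewrite mxE.
      by case: ifP => _; [rewrite expr0 mulr1 | rewrite mulr0].
    rewrite [hidden _ _ _ j.+1]/= IH ?(ltnW hj) // /W. rewrite -scalemxAl scaleE.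
    rewrite (@J_const R m (N j.+2) (N j.+1) (t * D * r ^+ j) _ (hmle j.+1 (ltnW hj))); last first.
      move=> jj hjj; rewrite /relu !mxE hjj addr0 max_r //.
      by apply: mulr_ge0; [apply: mulr_ge0 => //; exact: ltW | exact: exprn_ge0].
    by case: ifP => _; [rewrite exprS; ring | rewrite mulr0].
  have hquant : forall j, (j < k.+1)%N ->
      map_mx (quant eta) (W j) *m hidden (fun l => map_mx (quant eta) (W l))
                                        (fun l => map_mx (quant eta) (b l)) x j = 0.
    elim=> [|j IH] hj; apply/matrixP => i i0; rewrite !mxE big1 // => jj _.
      rewrite mapE /W scaleE mxE; case: (_ && _) => /=.
        by rewrite mulr1 hquantt mul0r.
      by rewrite mulr0 hquant0 mul0r.
    rewrite [hidden _ _ _ j.+1]/= IH ?(ltnW hj) //.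
    by rewrite /relu mapE [X in _ * X]mapE mxE add0r mapE /b /= zeroE hquant0 maxxx mulr0.
  have := H W b hball x hx.
  rewrite [realization _ _ _ _]/= [realization _ _ _ _]/=.
  rewrite horig // hquant //.
  rewrite (@qnorm_ind R q _ m (t * D * r ^+ k)); first by [].
  - exact: q1.
  - by rewrite mulr_ge0 ?exprn_ge0 // mulr_ge0 // ltW.
  - exact: hm0.
  - exact: hmle.
  by move=> i; rewrite !mxE hquant0 addr0 add0r subr0.
have cpos : 0 < c' * r ^+ k.
  by rewrite /c' -/m mulr_gt0 ?mulr_gt0 // exprn_gt0 // (lt_le_trans ltr01).
have key2 : forall t, 0 <= t -> t <= r -> t < eta -> t <= eps / (c' * r ^+ k).
  move=> t t0 tr te; rewrite ler_pdivlMr //.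
  by apply: le_trans (key t t0 tr te); rewrite /c' -/m le_eqVlt; apply/orP; left; apply/eqP; ring.
have K0 : 0 <= eps / (c' * r ^+ k) by rewrite divr_ge0 // ltW.
have part1 : Num.min r eta <= eps / (c' * r ^+ k).
  rewrite leNgt; apply/negP => hK.
  set K := eps / (c' * r ^+ k) in K0 key2 hK *.
  have hmr : Num.min r eta <= r by rewrite ge_min lexx.
  have hme : Num.min r eta <= eta by rewrite ge_min lexx orbT.
  set mn := Num.min r eta in hK hmr hme *.
  have h1 : 0 <= (K + mn) / 2 by lra.
  have h2 : (K + mn) / 2 <= r by lra.
  have h3 : (K + mn) / 2 < eta by lra.
  have := key2 _ h1 h2 h3.
  lra.
split => // hlt.
move: part1; rewrite ge_min => /orP[hr|//].
have e : r * (c' * r ^+ k) = c' * r ^+ k.+1 by rewrite exprS; ring.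
have : eps / (c' * r ^+ k) < r by rewrite ltr_pdivrMr // e.
by rewrite ltNge hr.
Qed.
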